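(* Let $M\ge1$, let $(\tau^\prime,R)$ be an $M$-layer medium, let $\mathsf{p}\in\mathsf{S}_M^\prime$ be a transmission scattering sequence, and set $(k,m)=(\kappa^\prime(\mathsf{p}),\beta^\prime(\mathsf{p}))$. Then \[ w(\mathsf{p})=(-R)^{\tilde{k}-m}R^{k-m}T^{2m+\mathbb{1}}. \]
   Context: Fix depths $z_{-1}<z_0<\cdots<z_M<z_{M+1}$ and reals $R=(R_0,\ldots,R_M)$ with $-1<R_n<1$ (the travel times $\tau^\prime$ play no role); $T_n=\sqrt{1-R_n^2}$, $T=(T_0,\ldots,T_M)$. A transmission scattering sequence is a finite sequence $\mathsf{p}=(\mathsf{p}_0,\ldots,\mathsf{p}_L)$ with $\mathsf{p}_0=z_{-1}$, $\mathsf{p}_L=z_{M+1}$, $\mathsf{p}_i\in\{z_0,\ldots,z_M\}$ for $1\le i\le L-1$, and for every $0\le i\le L-1$ there is $-1\le j\le M$ with $\{\mathsf{p}_i,\mathsf{p}_{i+1}\}=\{z_j,z_{j+1}\}$; $\mathsf{S}_M^\prime$ is the set of these. Its weight is $w(\mathsf{p})=\prod_{i=1}^{L-1}w_i$ where, if $\mathsf{p}_i=z_j$: $w_i=R_j$ if $\mathsf{p}_{i-1}=\mathsf{p}_{i+1}=z_{j-1}$; $w_i=-R_j$ if $\mathsf{p}_{i-1}=\mathsf{p}_{i+1}=z_{j+1}$; $w_i=T_j$ otherwise. For $0\le n\le M$, consider the maximal runs of consecutive indices $i$ with $\mathsf{p}_i\in\{z_n,\ldots,z_{M+1}\}$; the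 last one (containing index $L$) is the trunk run. $k_n$ is the number of non-trunk runs and $m_n$ the number of non-trunk runs of length at least 2; $\kappa^\prime(\mathsf{p})=(k_0,\ldots,k_M)$, $\beta^\prime(\mathsf{p})=(m_0,\ldots,m_M)$. Notation: $\tilde{k}=(k_1,\ldots,k_M,0)$; $\mathbb{1}=(1,\ldots,1)$; vector arithmetic entrywise; $s^d=\prod_{n=0}^M s_n^{d_n}$ with $0^0=1$. *)

(* Defs.v *)
From mathcomp Require Import all_boot all_order all_algebra.
Set Implicit Arguments. Unset Strict Implicit. Unset Printing Implicit Defensive.
Import Order.TTheory GRing.Theory Num.Theory.
Local Open Scope ring_scope.

(* Encoding: the depth z_j (-1 <= j <= M+1) is encoded by the natural number
   j+1 (so z_{-1} ~ 0, z_0 ~ 1, ..., z_M ~ M+1, z_{M+1} ~ M+2).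
   A scattering sequence p = (p_0,...,p_L) is a list of such codes. *)

Definition pos (p : seq nat) (i : nat) : nat := nth 0%N p i.

Definition lastidx (p : seq nat) : nat := (size p).-1.

Definition is_tss (M : nat) (p : seq nat) : bool :=
  [&& (2 <= size p)%N,
      pos p 0 == 0%N,
      pos p (lastidx p) == M.+2,
      all (fun i => (1 <= pos p i <= M.+1)%N)
          (iota 1 (lastidx p).-1)
    & all (fun i =>
             [exists j : 'I_M.+2,
                ((pos p i == j) && (pos p i.+1 == j.+1)) ||
                ((pos p i == j.+1) && (pos p i.+1 == j))])
          (iota 0 (lastidx p))].

Definition Tco (F : rcfType) (R : nat -> F) (n : nat) : F := Num.sqrt (1 - R n ^+ 2).

Definition wfac (F : rcfType) (R : nat -> F) (p : seq nat) (i : nat) : F :=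
  let a := pos p i.-1 in let b := pos p i.+1 in let c := pos p i in
  let j := c.-1 in
  if (a == b) && (a.+1 == c) then R j
  else if (a == b) && (a == c.+1) then - R j
  else Tco R j.

Definition weight (F : rcfType) (R : nat -> F) (p : seq nat) : F :=
  \prod_(1 <= i < lastidx p) wfac R p i.

Definition inlev (p : seq nat) (n i : nat) : bool := (n.+1 <= pos p i)%N.

Definition is_run (p : seq nat) (n a b : nat) : bool :=
  [&& (a <= b <= lastidx p)%N,
      all (inlev p n) (iota a (b - a).+1),
      (a == 0%N) || ~~ inlev p n a.-1
    & (b == lastidx p) || ~~ inlev p n b.+1].

(* k_n : number of non-trunk runs (the trunk run is the one containing L) *)
Definition kappa (p : seq nat) (n : nat) : nat :=
  #|[set ab : 'I_(lastidx p).+1 * 'I_(lastidx p).+1 |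
      is_run p n ab.1 ab.2 && (nat_of_ord ab.2 != lastidx p)]|.

Definition beta (p : seq nat) (n : nat) : nat :=
  #|[set ab : 'I_(lastidx p).+1 * 'I_(lastidx p).+1 |
      [&& is_run p n ab.1 ab.2, nat_of_ord ab.2 != lastidx p &
          (ab.1 < ab.2)%N]]|.

Definition ktilde (M : nat) (p : seq nat) (n : nat) : nat :=
  if (n < M)%N then kappa p n.+1 else 0%N.

(* Main.v *)
Require Import Defs.
From mathcomp Require Import all_boot all_order all_algebra.
From mathcomp Require Import zify.
Set Implicit Arguments. Unset Strict Implicit.
Import GRing.Theory Num.Theory.


Lemma tss_size M p : is_tss M p -> (1 <= lastidx p)%N.
Proof. by case/and5P; rewrite /lastidx; case: p => [|? [|? ?]]. Qed.

Lemma tss_first M p : is_tss M p -> pos p 0 = 0%N.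
Proof. by case/and5P => _ /eqP. Qed.

Lemma tss_last M p : is_tss M p -> pos p (lastidx p) = M.+2.
Proof. by case/and5P => _ _ /eqP. Qed.

Lemma tss_mid M p i : is_tss M p -> (1 <= i < lastidx p)%N ->
  (1 <= pos p i <= M.+1)%N.
Proof.
case/and5P => _ _ _ /allP H _ Hi; apply: H; rewrite mem_iota; lia.
Qed.

Lemma tss_adj M p i : is_tss M p -> (i < lastidx p)%N ->
  pos p i.+1 = (pos p i).+1 \/ pos p i = (pos p i.+1).+1.
Proof.
case/and5P => _ _ _ _ /allP H Hi.
have /existsP [j /orP [/andP [/eqP -> /eqP ->] | /andP [/eqP -> /eqP ->]]] :
  _ := H i ltac:(rewrite mem_iota; lia); by [left|right].
Qed.


Definition UD p n i : nat := [&& pos p i.-1 == n, pos p i == n.+1 & pos p i.+1 == n].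
Definition DU p n i : nat := [&& pos p i.-1 == n.+2, pos p i == n.+1 & pos p i.+1 == n.+2].
Definition UU p n i : nat := [&& pos p i.-1 == n, pos p i == n.+1 & pos p i.+1 == n.+2].
Definition DD p n i : nat := [&& pos p i.-1 == n.+2, pos p i == n.+1 & pos p i.+1 == n].

Local Open Scope ring_scope.

Definition G (F : rcfType) (R : nat -> F) p n i : F :=
  (- R n) ^+ DU p n i * R n ^+ UD p n i * Tco R n ^+ (UU p n i + DD p n i).

Lemma wfac_exp (F : rcfType) M (R : nat -> F) p i : is_tss M p ->
  (1 <= i < lastidx p)%N ->
  wfac R p i = \prod_(0 <= n < M.+1) G R p n i.
Proof.
move=> Ht Hi.
have Hc := tss_mid Ht Hi.
set c := pos p i in Hc.
have Hn0 : (c.-1 < M.+1)%N by lia.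
rewrite big_mkord (bigD1 (Ordinal Hn0)) //= big1 ?mulr1; last first.
  move=> j /eqP Hj; rewrite /G /DU /UD /UU /DD -/c.
  have -> : (c == j.+1) = false.
    apply/eqP => E; apply: Hj; apply: val_inj => /=; rewrite E.
    done.
  by rewrite !andbF /= !mulr1.
have Ha := tss_adj Ht (_ : (i.-1 < lastidx p)%N).
have {Ha} Ha : pos p i.-1 = c.-1 \/ pos p i.-1 = c.+1.
  case: (Ha ltac:(lia)); rewrite prednK; try lia; rewrite -/c; lia.
have Hb : pos p i.+1 = c.-1 \/ pos p i.+1 = c.+1.
  case: (tss_adj Ht (_ : (i < lastidx p)%N)); try lia; rewrite -/c; lia.
rewrite /wfac /G /DU /UD /UU /DD -/c.
move: Hc Hn0 Ha Hb; rewrite /c; clear c; case: (pos p i) => [|n] //= _ _.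
have E1 : (n.+2 == n) = false by lia.
have E2 : (n == n.+2) = false by lia.
have E3 : (n.+1 == n.+2) = false by lia.
have E4 : (n.+2 == n.+1) = false by lia.
have E5 : (n.+3 == n.+1) = false by lia.
case => ->; case => ->; rewrite ?eqxx ?E1 ?E2 ?E3 ?E4 ?E5 /= ?expr0 ?expr1 ?mul1r ?mulr1 //.
Qed.

Lemma weight_exp (F : rcfType) M (R : nat -> F) p : is_tss M p ->
  weight R p = \prod_(0 <= n < M.+1)
    ((- R n) ^+ (\sum_(1 <= i < lastidx p) DU p n i)%N
     * R n ^+ (\sum_(1 <= i < lastidx p) UD p n i)%N
     * Tco R n ^+ (\sum_(1 <= i < lastidx p) UU p n i + \sum_(1 <= i < lastidx p) DD p n i)%N).
Proof.
move=> Ht; rewrite /weight (eq_big_nat _ _ (fun i Hi => wfac_exp R Ht Hi)).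
rewrite exchange_big_nat; apply: eq_bigr => n _.
by rewrite /G !big_split /= !prodrXr big_split.
Qed.

Local Close Scope ring_scope.


Lemma allP_iota (P : pred nat) a b : (a <= b)%N ->
  reflect (forall i, (a <= i <= b)%N -> P i) (all P (iota a (b - a).+1)).
Proof.
move=> ab; apply: (iffP allP) => H i Hi; apply: H; move: Hi; rewrite mem_iota; lia.
Qed.

Lemma run_le p n a b : is_run p n a b -> (a <= b <= lastidx p)%N.
Proof. by case/and4P. Qed.

Lemma run_in p n a b i : is_run p n a b -> (a <= i <= b)%N -> inlev p n i.
Proof.
case/and4P => /andP [ab _] /(allP_iota _ ab) H _ _; exact: H.
Qed.

Lemma run_uniq p n a a' b : is_run p n a b -> is_run p n a' b -> a = a'.
Proof.
wlog: a a' / (a <= a')%N.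
  move=> W H1 H2; case: (leqP a a') => h; first exact: W.
  by symmetry; apply: W => //; exact: ltnW.
move=> aa' H1 H2; apply/eqP; rewrite eqn_leq aa' /=; apply/negP => /negP; rewrite -ltnNge => lt.
have := run_le H2 => /andP [a'b _].
have Hin : inlev p n a'.-1 by apply: (run_in H1); lia.
case/and4P: H2 => _ _ /orP [/eqP a0|]; first lia.
by rewrite Hin.
Qed.

Lemma run_exists p n b : (b <= lastidx p)%N -> inlev p n b ->
  (b == lastidx p) || ~~ inlev p n b.+1 -> exists a, is_run p n a b.
Proof.
move=> bL Hb Hend.
pose P a := (a <= b)%N && all (inlev p n) (iota a (b - a).+1).
have exP : exists a, P a by exists b; rewrite /P leqnn subnn /= Hb.
case: (ex_minnP exP) => a /andP [ab Hall] Hmin.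
exists a; rewrite /is_run ab bL Hall Hend /= andbT.
apply/orP; case: a ab Hall Hmin => [|a] ab Hall Hmin; [by left | right].
apply/negP => Ha.
have : P a.
  rewrite /P; apply/andP; split; first lia.
  apply/allP_iota; first lia.
  move=> i Hi; case: (ltnP a i) => h.
    by apply: (allP_iota _ ab Hall); lia.
  by have -> : i = a by lia.
by move/Hmin; lia.
Qed.

Lemma card_runs p n (X : nat -> nat -> bool) (D : nat -> bool) :
  (forall b, (b <= lastidx p)%N -> (exists a, is_run p n a b && X a b) <-> D b) ->
  #|[set ab : 'I_(lastidx p).+1 * 'I_(lastidx p).+1 |
      is_run p n ab.1 ab.2 && X ab.1 ab.2]| = (\sum_(0 <= b < (lastidx p).+1) D b)%N.
Proof.
move=> HD.
rewrite -(card_in_imset (f := snd)); last first.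
  move=> [a b] [a' b']; rewrite !inE /= => /andP [H1 _] /andP [H2 _] E.
  subst b'; congr pair; apply: val_inj; exact: run_uniq H1 H2.
have -> : [set x.2 | x in [set ab : 'I_(lastidx p).+1 * 'I_(lastidx p).+1 |
      is_run p n ab.1 ab.2 && X ab.1 ab.2]] = [set b : 'I_(lastidx p).+1 | D b].
  apply/setP => b; rewrite inE; apply/imsetP/idP.
    case=> [[a b'] Hab ->] /=; rewrite inE /= in Hab.
    have bl : (b' <= lastidx p)%N by rewrite -ltnS.
    by apply/(HD _ bl); exists a.
  move=> Db; have bl : (b <= lastidx p)%N by rewrite -ltnS.
  have [a /andP [Hr Hx]] := (proj2 (HD _ bl)) Db.
  have al : (a < (lastidx p).+1)%N by have := run_le Hr; lia.
  by exists (Ordinal al, b); rewrite // inE /= Hr.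
rewrite -sum1_card big_mkcond /= big_mkord.
by apply: eq_bigr => i _; rewrite inE; case: (D i).
Qed.

Arguments pos : simpl never.

Lemma adj3 M p i : is_tss M p -> (1 <= i < lastidx p)%N ->
  (pos p i = (pos p i.-1).+1 \/ pos p i.-1 = (pos p i).+1) /\
  (pos p i.+1 = (pos p i).+1 \/ pos p i = (pos p i.+1).+1).
Proof.
move=> Ht Hi; split; last by apply: (tss_adj Ht); lia.
have := tss_adj Ht (_ : (i.-1 < lastidx p)%N); rewrite prednK; last lia.
by apply; lia.
Qed.

Lemma kappa_sum M p n : is_tss M p -> (n <= M)%N ->
  kappa p n = (\sum_(1 <= i < lastidx p) (UD p n i + DD p n i))%N.
Proof.
move=> Ht nM.
have L1 := tss_size Ht.
rewrite /kappa (card_runs (X := fun a b => b != lastidx p) (D := fun b => (b != lastidx p) && inlev p n b && ~~ inlev p n b.+1)).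
  rewrite big_nat_recr //= eqxx andFb addn0 big_ltn //.
  rewrite /inlev (tss_first Ht) ltn0 andbF andFb add0n.
  apply: eq_big_nat => i Hi.
  have [Ha Hb] := adj3 Ht Hi.
  have Hm := tss_mid Ht Hi.
  rewrite /UD /DD /inlev.
  have -> : (i != lastidx p) by lia.
  lia.
move=> b bL; split.
  case=> a /andP [Hr Hb]; rewrite Hb /=.
  have := run_le Hr => /andP [ab _].
  rewrite (run_in Hr (_ : (a <= b <= b)%N)) /=; last by rewrite ab leqnn.
  by case/and4P: Hr => _ _ _; rewrite (negbTE Hb).
case/andP => /andP [Hb Hin] Hn.
have [a Hr] : exists a, is_run p n a b by apply: run_exists => //; rewrite Hn orbT.
by exists a; rewrite Hr.
Qed.

Lemma beta_sum M p n : is_tss M p -> (n <= M)%N ->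
  beta p n = (\sum_(1 <= i < lastidx p) DD p n i)%N.
Proof.
move=> Ht nM.
have L1 := tss_size Ht.
rewrite /beta (card_runs (X := fun a b => (b != lastidx p) && (a < b)%N) (D := fun b => [&& (b != lastidx p), inlev p n b, ~~ inlev p n b.+1,
      inlev p n b.-1 & (0 < b)%N])).
  rewrite big_nat_recr //= eqxx andFb addn0 big_ltn //= ltnn !andbF add0n.
  apply: eq_big_nat => i Hi.
  have [Ha Hb] := adj3 Ht Hi.
  have Hm := tss_mid Ht Hi.
  rewrite /DD /inlev.
  have -> : (i != lastidx p) by lia.
  lia.
move=> b bL; split.
  case=> a /and3P [Hr Hb ab]; rewrite Hb /=.
  have := run_le Hr => /andP [ab' _].
  rewrite (run_in Hr (_ : (a <= b <= b)%N)) /=; last by rewrite ab' leqnn.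
  rewrite (run_in Hr (_ : (a <= b.-1 <= b)%N)) /=; last lia.
  apply/andP; split; last lia.
  by case/and4P: Hr => _ _ _; rewrite (negbTE Hb).
case/and5P => Hb Hin Hn Hp b0.
have [a Hr] : exists a, is_run p n a b by apply: run_exists => //; rewrite Hn orbT.
exists a; rewrite Hr Hb /=.
have := run_le Hr => /andP [ab _].
rewrite ltn_neqAle ab andbT; apply/eqP => E; subst a.
case/and4P: Hr => _ _ /orP [/eqP|]; [lia | by rewrite Hp].
Qed.



Definition dn p n j : nat := (pos p j == n.+1) && (pos p j.+1 == n).
Definition up p n j : nat := (pos p j == n) && (pos p j.+1 == n.+1).

Lemma tss_lt M p j : is_tss M p -> (j < lastidx p)%N -> (pos p j <= M.+1)%N.
Proof.
move=> Ht Hj; case: j Hj => [|j] Hj; first by rewrite (tss_first Ht).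
by have := tss_mid Ht (_ : (1 <= j.+1 < lastidx p)%N); lia.
Qed.

Lemma telescope M p n : is_tss M p -> (n <= M)%N ->
  (\sum_(0 <= j < lastidx p) up p n j = \sum_(0 <= j < lastidx p) dn p n j + 1)%N.
Proof.
move=> Ht nM.
have L1 := tss_size Ht.
have E : (\sum_(0 <= j < lastidx p) ((pos p j <= n) + dn p n j) =
          \sum_(0 <= j < lastidx p) ((pos p j.+1 <= n) + up p n j))%N.
  apply: eq_big_nat => j Hj; have := tss_adj Ht (_ : (j < lastidx p)%N).
  rewrite /dn /up; move=> H; have {H} := H ltac:(lia); lia.
move: E; rewrite !big_split /=.
have [L' EL] : exists L', lastidx p = L'.+1 by exists (lastidx p).-1; lia.
have HL := tss_last Ht; rewrite EL in HL.
rewrite EL big_nat_recl // (big_nat_recr _ _ (fun j => nat_of_bool (pos p j.+1 <= n)%N)) //=.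
rewrite HL (tss_first Ht) /=.
have -> : (M.+2 <= n)%N = false by lia.
move=> E; lia.
Qed.

Lemma sum_shift (f g : nat -> nat) L : (forall j, (j.+1 < L)%N -> f j.+1 = g j) ->
  (\sum_(1 <= i < L) f i = \sum_(0 <= j < L.-1) g j)%N.
Proof. move=> H; rewrite big_add1; apply: eq_big_nat => j Hj; apply: H; lia. Qed.

Lemma UD_DD M p n : is_tss M p ->
  (\sum_(1 <= i < lastidx p) (UD p n i + DD p n i) = \sum_(0 <= j < lastidx p) dn p n j)%N.
Proof.
move=> Ht; have L1 := tss_size Ht.
rewrite [in RHS]big_ltn // {1}/dn (tss_first Ht) /= add0n.
apply: eq_big_nat => i Hi; have [Ha Hb] := adj3 Ht Hi.
rewrite /UD /DD /dn; lia.
Qed.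

Lemma UU_DD M p n : is_tss M p -> (n <= M)%N ->
  (\sum_(1 <= i < lastidx p) UU p n i = \sum_(1 <= i < lastidx p) DD p n i + 1)%N.
Proof.
move=> Ht nM.
have L1 := tss_size Ht.
have T := telescope Ht nM.
have S1 : (\sum_(1 <= i < lastidx p) (UU p n i + UD p n i) = \sum_(0 <= j < lastidx p) up p n j)%N.
  rewrite (@sum_shift _ (up p n)); last first.
    move=> j Hj; have Hi : (1 <= j.+1 < lastidx p)%N by lia.
    have [Ha Hb] := adj3 Ht Hi.
    rewrite /UU /UD /up /=; lia.
  have [L' EL] : exists L', lastidx p = L'.+1 by exists (lastidx p).-1; lia.
  have HL := tss_last Ht; rewrite EL in HL.
  rewrite EL big_nat_recr //=.
  have -> : up p n L' = 0%N by rewrite /up HL; lia.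
  by rewrite addn0.
have S2 : (\sum_(1 <= i < lastidx p) (UD p n i + DD p n i) = \sum_(0 <= j < lastidx p) dn p n j)%N.
  rewrite [in RHS]big_ltn // {1}/dn (tss_first Ht) /= add0n.
  apply: eq_big_nat => i Hi; have [Ha Hb] := adj3 Ht Hi.
  rewrite /UD /DD /dn; lia.
move: S1 S2 T; rewrite !big_split /=; lia.
Qed.

Lemma DU_DD M p n : is_tss M p -> (n <= M)%N ->
  ktilde M p n = (\sum_(1 <= i < lastidx p) DU p n i + \sum_(1 <= i < lastidx p) DD p n i)%N.
Proof.
move=> Ht nM.
have L1 := tss_size Ht.
rewrite -big_split /= (@sum_shift _ (dn p n.+1)); last first.
  move=> j Hj; have Hi : (1 <= j.+1 < lastidx p)%N by lia.
  have [Ha Hb] := adj3 Ht Hi.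
  rewrite /DU /DD /dn /=; lia.
rewrite /ktilde; case: ltnP => Hn.
  rewrite (kappa_sum Ht Hn) (UD_DD _ Ht).
  have [L' EL] : exists L', lastidx p = L'.+1 by exists (lastidx p).-1; lia.
  have HL := tss_last Ht; rewrite EL in HL.
  rewrite EL big_nat_recr //=.
  have -> : dn p n.+1 L' = 0%N by rewrite /dn HL; lia.
  by rewrite addn0.
symmetry; rewrite big1_seq // => j; rewrite mem_iota => /andP [_ Hj].
rewrite /dn; have := tss_lt Ht (_ : (j < lastidx p)%N); lia.
Qed.

Unset Implicit Arguments.
Local Open Scope ring_scope.

Theorem lemma3 (F : rcfType) (M : nat) (R : nat -> F) (p : seq nat) :
  (1 <= M)%N ->
  (forall n : nat, (n <= M)%N -> -1 < R n < 1) ->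
  is_tss M p ->
  weight R p =
  \prod_(0 <= n < M.+1)
     ((- R n) ^ ((ktilde M p n)%:Z - (beta p n)%:Z)
      * R n ^ ((kappa p n)%:Z - (beta p n)%:Z)
      * Tco R n ^ ((2 * beta p n).+1)%:Z).
Proof.
move=> _ _ Ht; rewrite (weight_exp R Ht); apply: eq_big_nat => n Hn.
have nM : (n <= M)%N by rewrite -ltnS; case/andP: Hn.
rewrite (beta_sum Ht nM) (kappa_sum Ht nM) (DU_DD Ht nM) big_split /=.
have E := UU_DD Ht nM.
rewrite !PoszD !addrK E.
have -> : ((2 * \sum_(1 <= i < lastidx p) DD p n i).+1 = \sum_(1 <= i < lastidx p) DD p n i + 1 + \sum_(1 <= i < lastidx p) DD p n i)%N.
  by rewrite mul2n -addnn addn1 addSn.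
by [].
Qed.
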